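(* Let $p>1$, $1/p+1/q=1$, let $\{(x_i,y_i)\}_{i=1}^n\subset\mathbb{R}^d\times\{\pm1\}$ be linearly separable with $\max_i\|x_i\|_q<C$, and let $L(w)=\frac1n\sum_i\ell(y_i\langle w,x_i\rangle)$ with $\ell$ differentiable, decreasing, convex, not attaining its minimum, $\inf\ell=0$. Assume the regularized direction $\bar w^{\mathrm{reg}}_p$ exists. Let $\alpha>0$ and let $r_\alpha$ be such that $L((1+\alpha)\|w\|_p\bar w^{\mathrm{reg}}_p)\le L(w)$ for all $w$ with $\|w\|_p>r_\alpha$. Then for every $w$ with $\|w\|_p>r_\alpha$, $$\langle\nabla L(w),w\rangle\ge(1+\alpha)\|w\|_p\,\langle\nabla L(w),\bar w^{\mathrm{reg}}_p\rangle.$$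
   Context: The regularized direction is $\bar w^{\mathrm{reg}}_p=\lim_{B\to\infty}\bar w_p(B)/B$, where $\bar w_p(B)=\arg\min_{\|w\|_p\le B}L(w)$. *)

(* Defs.v *)
From HB Require Import structures.
From mathcomp Require Import all_boot all_order all_algebra.
From mathcomp Require Import all_classical all_reals all_analysis.
Set Implicit Arguments. Unset Strict Implicit. Unset Printing Implicit Defensive.
Import Order.TTheory GRing.Theory Num.Theory.
Import numFieldNormedType.Exports.
Local Open Scope classical_set_scope.
Local Open Scope ring_scope.

Section Defs.
Variable R : realType.

Definition dotv (d : nat) (u v : 'rV[R]_d) : R := \sum_(j < d) u 0 j * v 0 j.

Definition pnorm (d : nat) (p : R) (w : 'rV[R]_d) : R :=
  (\sum_(j < d) `|w 0 j| `^ p) `^ p^-1.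

Definition Lemp (d n : nat) (ell : R -> R) (X : 'I_n -> 'rV[R]_d) (Y : 'I_n -> R)
  (w : 'rV[R]_d) : R :=
  n%:R^-1 * \sum_(i < n) ell (Y i * dotv w (X i)).

Definition gradv (d : nat) (F : 'rV[R]_d -> R) (w : 'rV[R]_d) : 'rV[R]_d :=
  \row_(j < d) derive1 (fun t : R => F (w + t *: delta_mx 0 j)) 0.

Definition linearly_separable (d n : nat) (X : 'I_n -> 'rV[R]_d) (Y : 'I_n -> R) :=
  exists w : 'rV[R]_d, forall i, 0 < Y i * dotv w (X i).

Definition is_constrained_min (d : nat) (p : R) (F : 'rV[R]_d -> R) (B : R)
  (wb : 'rV[R]_d) :=
  pnorm p wb <= B /\ forall v, pnorm p v <= B -> F wb <= F v.

(* wreg is the regularized direction lim_{B->oo} wbar_p(B)/B, for a choice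
   wbar_p(B) in argmin_{||w||_p <= B} F(w) *)
Definition is_reg_direction (d : nat) (p : R) (F : 'rV[R]_d -> R) (wreg : 'rV[R]_d) :=
  exists wbar : R -> 'rV[R]_d,
    (forall B, 0 < B -> is_constrained_min p F B (wbar B)) /\
    (B^-1 *: wbar B) @[B --> +oo] --> wreg.

End Defs.

(* Main.v *)
Require Import Defs.
From HB Require Import structures.
From mathcomp Require Import all_boot all_order all_algebra.
From mathcomp Require Import all_classical all_reals all_analysis.
Import Order.TTheory GRing.Theory Num.Theory.
Import numFieldNormedType.Exports.
Local Open Scope classical_set_scope.
Local Open Scope ring_scope.
From mathcomp Require Import ring lra.

Section S.
Variable R : realType.

Lemma Dscal (ell : R -> R) (a c : R) : derivable ell a 1 ->
  derive ell a c = c * derive1 ell a.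
Proof.
move=> /derivable1_diffP df.
rewrite derive1E !deriveE // -[c in LHS]mulr1.
by rewrite -[c * 1]/(c *: (1:R)) linearZ.
Qed.

Lemma quot_bound (ell : R -> R) (a b h : R) :
  (forall s t lam, 0 <= lam <= 1 ->
     ell (lam * s + (1 - lam) * t) <= lam * ell s + (1 - lam) * ell t) ->
  h != 0 -> h <= 1 ->
  h^-1 * (ell (h * (b - a) + a) - ell a) <= ell b - ell a.
Proof.
move=> cvx h0 h1.
case: (ltgtP h 0) => hs; last by move: h0; rewrite hs eqxx.
- rewrite ler_ndivrMl //.
  have l0 : 0 < 1 - h by rewrite subr_gt0 (lt_trans hs).
  pose lam := (1 - h)^-1.
  have hl : 0 <= lam <= 1.
    apply/andP; split; first by rewrite invr_ge0 ltW.
    rewrite invr_le1 ?unitfE ?gt_eqF //; lra.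
  have := cvx (h * (b - a) + a) b lam hl.
  have -> : lam * (h * (b - a) + a) + (1 - lam) * b = a.
    rewrite /lam; field; by rewrite gt_eqF.
  have -> : 1 - lam = - h * lam by rewrite /lam; field; rewrite gt_eqF.
  move=> H.
  have H2 := ler_wpM2l (ltW l0) H.
  have e : (1 - h) * (lam * ell (h * (b - a) + a) + - h * lam * ell b)
     = ell (h * (b - a) + a) - h * ell b.
    rewrite /lam; field; by rewrite gt_eqF.
  rewrite e in H2.
  lra.
- rewrite ler_pdivrMl //.
  have hl : 0 <= h <= 1 by rewrite ltW.
  have := cvx b a h hl.
  have -> : h * b + (1 - h) * a = h * (b - a) + a by ring.
  lra.
Qed.


Lemma grad_ineq (ell : R -> R) (a b : R) :
  (forall t, derivable ell t 1) ->
  (forall s t lam, 0 <= lam <= 1 ->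
     ell (lam * s + (1 - lam) * t) <= lam * ell s + (1 - lam) * ell t) ->
  derive1 ell a * (b - a) <= ell b - ell a.
Proof.
move=> der cvx.
rewrite mulrC -Dscal // /derive.
have da : derivable ell a (b - a).
  by apply: diff_derivable; apply/derivable1_diffP.
apply: limr_le; first exact: da.
near=> h.
rewrite /= /shift.
apply: quot_bound => //.
  near: h; exact: nbhs_dnbhs_neq.
near: h.
apply: filterS (dnbhs0_lt (@ltr01 R)) => x /ltW.
exact: le_trans (ler_norm x).
Unshelve. all: by end_near.
Qed.


Lemma dotv_shift d (w x : 'rV[R]_d) (j : 'I_d) (t : R) :
  dotv (w + t *: delta_mx 0 j) x = dotv w x + t * x 0 j.
Proof.
rewrite /dotv.
under eq_bigr => k _ do rewrite !mxE mulrDl.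
rewrite big_split /=; congr (_ + _).
rewrite (bigD1 j) //= big1 ?addr0.
  by rewrite eqxx /= mulr1.
by move=> k kj; move: kj; case: eqP => //= _ _; rewrite mulr0 mul0r.
Qed.

Lemma is_derive_line (ell : R -> R) (a c : R) : derivable ell a 1 ->
  is_derive (0:R) 1 (fun t : R => ell (t *: c + a)) (c * derive1 ell a).
Proof.
move=> der.
have dc : derivable ell a c by apply: diff_derivable; apply/derivable1_diffP.
have e : (fun h : R => h^-1 *: (((fun t : R => ell (t *: c + a)) \o shift 0) (h *: 1) -
            ell (0 *: c + a)))
       = (fun h : R => h^-1 *: ((ell \o shift a) (h *: c) - ell a)).
  by apply/funext => h /=; rewrite /shift addr0 scale0r add0r [_ *: (1:R)]mulr1.
apply: DeriveDef.
  by rewrite /derivable e.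
by rewrite /derive e -Dscal.
Qed.

Lemma grad_formula d n (ell : R -> R) (X : 'I_n -> 'rV[R]_d) (Y : 'I_n -> R)
  (w : 'rV[R]_d) : (forall t, derivable ell t 1) ->
  gradv (Lemp ell X Y) w = \row_j (n%:R^-1 *
     \sum_(i < n) (Y i * X i 0 j) * derive1 ell (Y i * dotv w (X i))).
Proof.
move=> der; apply/rowP => j; rewrite !mxE.
pose a i := Y i * dotv w (X i).
pose c i := Y i * X i 0 j.
have eqF : (fun t => Lemp ell X Y (w + t *: delta_mx 0 j)) =
   n%:R^-1 \*: \sum_(i < n) (fun t : R => ell (t *: c i + a i)).
  apply/funext => t; rewrite /Lemp fct_sumE /=; congr (_ * _).
  apply: eq_bigr => i _; rewrite dotv_shift /a /c; congr ell.
  by rewrite mulrDr addrC; congr (_ + _); rewrite mulrCA.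
have H : is_derive (0:R) 1 (n%:R^-1 \*: \sum_(i < n) (fun t : R => ell (t *: c i + a i)))
   (n%:R^-1 *: \sum_(i < n) (c i * derive1 ell (a i))).
  apply: is_deriveZ; apply: is_derive_sum => i; exact: is_derive_line.
by rewrite eqF derive1E (@derive_val _ _ _ _ _ _ _ H).
Qed.


Lemma dot_grad d n (k : R) (Y : 'I_n -> R) (X : 'I_n -> 'rV[R]_d) (g : 'I_n -> R)
  (u : 'rV[R]_d) :
  dotv (\row_j (k * \sum_(i < n) (Y i * X i 0 j) * g i)) u =
  k * \sum_(i < n) g i * (Y i * dotv u (X i)).
Proof.
rewrite /dotv.
under eq_bigr do rewrite mxE -mulrA mulr_suml.
rewrite -mulr_sumr; congr (_ * _).
rewrite exchange_big /=; apply: eq_bigr => i _.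
rewrite mulr_sumr mulr_sumr; apply: eq_bigr => j _.
by ring.
Qed.

Lemma dotvZ d (u v : 'rV[R]_d) (k : R) : dotv u (k *: v) = k * dotv u v.
Proof.
rewrite /dotv mulr_sumr; apply: eq_bigr => j _; rewrite mxE.
by rewrite mulrCA.
Qed.

End S.

Theorem corollary1 (R : realType) (d n : nat) (p q C : R)
  (X : 'I_n -> 'rV[R]_d) (Y : 'I_n -> R) (ell : R -> R) (wreg : 'rV[R]_d)
  (alpha r_alpha : R) :
  1 < p -> p^-1 + q^-1 = 1 ->
  (forall i, Y i = 1 \/ Y i = -1) ->
  linearly_separable X Y ->
  (forall i, pnorm q (X i) < C) ->
  (forall t, derivable ell t 1) ->
  (forall s t, s < t -> ell t < ell s) ->
  (forall s t lam, 0 <= lam <= 1 ->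
     ell (lam * s + (1 - lam) * t) <= lam * ell s + (1 - lam) * ell t) ->
  (forall t, exists s, ell s < ell t) ->
  (forall t, 0 <= ell t) -> (forall e, 0 < e -> exists t, ell t < e) ->
  is_reg_direction p (Lemp ell X Y) wreg ->
  0 < alpha ->
  (forall w, r_alpha < pnorm p w ->
     Lemp ell X Y (((1 + alpha) * pnorm p w) *: wreg) <= Lemp ell X Y w) ->
  forall w, r_alpha < pnorm p w ->
    (1 + alpha) * pnorm p w * dotv (gradv (Lemp ell X Y) w) wreg
      <= dotv (gradv (Lemp ell X Y) w) w.
Proof.
move=> _ _ _ _ _ der _ cvx _ _ _ _ _ Hr w hw.
have HL := Hr w hw.
set k := (1 + alpha) * pnorm p w in HL *.
rewrite -dotvZ (@grad_formula R d n ell X Y w der) !dot_grad.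
rewrite -subr_ge0 -mulrBr; apply: mulr_ge0; first by rewrite invr_ge0 ler0n.
rewrite subr_ge0.
have HS : \sum_(i < n) ell (Y i * dotv (k *: wreg) (X i)) <= \sum_(i < n) ell (Y i * dotv w (X i)).
  move: HL; rewrite /Lemp; clear; case: n X Y => [|m] X Y.
    by rewrite !big_ord0.
  by rewrite ler_pM2l // invr_gt0 ltr0n.
apply: (@le_trans _ _ (\sum_(i < n) derive1 ell (Y i * dotv w (X i)) * (Y i * dotv w (X i))
   + \sum_(i < n) (ell (Y i * dotv (k *: wreg) (X i)) - ell (Y i * dotv w (X i))))).
  rewrite -lerBlDl -sumrB; apply: ler_sum => i _.
  rewrite -mulrBr; exact: grad_ineq.
by rewrite gerDl sumrB subr_le0.
Qed.
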